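(* Let $\mathbb E^{\mathcal A},\mathbb E^{\mathcal B},\mathbb E^{\mathcal C}$ be decomposed symmetric $n$-fold vector bundles over $M,N,P$ and $\eta=(\eta_p)_p\colon\mathbb E^{\mathcal A}\to\mathbb E^{\mathcal B}$, $\tau=(\tau_p)_p\colon\mathbb E^{\mathcal B}\to\mathbb E^{\mathcal C}$ morphisms of symmetric $n$-fold vector bundles over $\eta_0\colon M\to N$, $\tau_0\colon N\to P$. Then $\tau\circ\eta$, a morphism over $\tau_0\circ\eta_0$, has components given, for every nondecreasing tuple $p=(i_1,\ldots,i_k)$ with $\sum p\le n$, $\rho^p_{\rm can}=(K_1,\ldots,K_k)$ and $a_{K_j}\in A_{i_j}$ over a common point, by $$(\tau\circ\eta)_p(a_{K_1},\ldots,a_{K_k})=\sum_{(\rho_1,\ldots,\rho_l)}\mathrm{sgn}(\rho_1,\ldots,\rho_l)\,\tau_{(\#\cup\rho_1,\ldots,\#\cup\rho_l)}\Big(\eta_{|\rho_1|}\big((a_K)_{K\in\rho_1}\big),\ldots,\eta_{|\rho_l|}\big((a_K)_{K\in\rho_l}\big)\Big),$$ the sum running over all $l\ge1$ and tuples of canonically ordered partitions $\rho_1,\ldots,\rho_l$ with $\rho_1\cup\cdots\cup\rho_l=\{K_1,\ldots,K_k\}$ as sets and $\cup\rho_1<\cdots<\cup\rho_l$ in the canonical order of subsets (by cardinality, then lexicographically); $(\rho_1,\ldots,\rho_l)$ denotes the concatenated ordered partition of $\{1,\ldots,\sum p\}$ and $(a_K)_{K\in\rho_j}$ is listed in the order of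 $\rho_j$.
   Context: For vector bundles $A_1,\ldots,A_n\to M$, $\mathbb E^{\mathcal A}(I)=\prod^M_{\emptyset\ne J\subseteq I}A_{\#J}$ with canonical projections and $S_n$-action $(a_J)_{J\subseteq I}\mapsto(\epsilon(\sigma^{-1},J)a_{\sigma^{-1}(J)})_{J\subseteq\sigma(I)}$, $\epsilon(\sigma,I)=(-1)^{\#\{(a,b)\in I^2:a<b,\sigma(a)>\sigma(b)\}}$. A morphism $\tau\colon\mathbb E^{\mathcal A}\to\mathbb E^{\mathcal B}$ of symmetric $n$-fold vector bundles (equivariant morphism of $n$-fold vector bundles) is the same as a family $(\tau_p)_{p}$, $p=(i_1,\ldots,i_k)$ nondecreasing with $\sum p\le n$, of vector bundle morphisms $\tau_p\colon A_{i_1}\otimes\cdots\otimes A_{i_k}\to B_{\sum p}$ over a common base map, symmetric in arguments from $A_j$, $j$ even, skew-symmetric for $j$ odd, via $\tau(J)((a_I)_{I\subseteq J})=(\sum_{\rho=(I_1,\ldots,I_k)\in\mathcal P(I)}\mathrm{sgn}(\rho)\tau_{(\#I_1,\ldots,\#I_k)}(a_{I_1},\ldots,a_{I_k}))_{I\subseteq J}$. Notation: $\mathcal P(I)$ canonically ordered partitions (increasing cardinality, ties lexicographic); $|\rho|=(\#I_1,\ldots,\#I_k)$; $\rho^p_{\rm can}$ the partition of $\{1,\ldots,\sum p\}$ into consecutive blocks of sizes $i_1,\ldots,i_k$; $\mathrm{sgn}$ of an ordered partition of a set = sign of the permutation from natural order to the order listing the blocks successively, each increasingly. *)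

(* Defs.v *)
(* Fibrewise model of decomposed symmetric n-fold vector
   bundles and of their morphisms given by components (tau_p)_p. *)
From HB Require Import structures.
From mathcomp Require Import all_boot all_order all_algebra all_fingroup.
From mathcomp Require Import reals.
Set Implicit Arguments. Unset Strict Implicit. Unset Printing Implicit Defensive.
Import GRing.Theory.
Local Open Scope ring_scope.

(* transport along an equality of indices (0 if the indices differ; in all
   uses below the indices are provably equal) *)
Definition vcast (R : pzRingType) (V : nat -> lmodType R) (i j : nat) (x : V i) : V j :=
  match @eqP nat i j with
  | ReflectT e => eq_rect i V x j e
  | ReflectF _ => 0
  end.
Arguments vcast {R} V {i} j x.

Fixpoint lex_lt (s t : seq nat) : bool :=
  match s, t with
  | [::], [::] => false
  | [::], _ :: _ => true
  | _ :: _, [::] => false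
  | x :: s', y :: t' => (x < y)%N || ((x == y) && lex_lt s' t')
  end.

Definition elems n (X : {set 'I_n}) : seq nat := sort leq [seq val x | x <- enum X].

Definition set_lt n (X Y : {set 'I_n}) : bool :=
  (#|X| < #|Y|)%N || ((#|X| == #|Y|) && lex_lt (elems X) (elems Y)).

Definition set_le n (X Y : {set 'I_n}) : bool := (X == Y) || set_lt X Y.

Definition corder n (P : {set {set 'I_n}}) : seq {set 'I_n} := sort (@set_le n) (enum P).

(* sign of an ordered partition: sign of the permutation from the natural
   order to the order listing the blocks successively, each increasingly *)
Definition inv_count (s : seq nat) : nat :=
  (\sum_(i < size s) \sum_(j < size s | (i < j)%N) (nth 0%N s j < nth 0%N s i)%N)%N.

Definition psgn (R : pzRingType) n (rho : seq {set 'I_n}) : R :=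
  (-1) ^+ inv_count (flatten [seq elems X | X <- rho]).

Definition valid_index (n : nat) (p : seq nat) : bool :=
  [&& (0 < size p)%N, all (fun i => 0 < i)%N p, sorted leq p & (sumn p <= n)%N].

(* ---- vector bundles: A i m is the fibre over m : M of A_i (i = 1..n) ---- *)
Definition cfamily (R : pzRingType) (M N : Type) (A : nat -> M -> lmodType R)
  (B : nat -> N -> lmodType R) (f : M -> N) :=
  forall (p : seq nat) (m : M), (forall j : 'I_(size p), A (nth 0%N p j) m) -> B (sumn p) (f m).

Section Morphisms.
Variables (R : pzRingType) (n : nat) (M N : Type).
Variables (A : nat -> M -> lmodType R) (B : nat -> N -> lmodType R) (f : M -> N).

(* tau_p is linear in each argument (i.e. defined on the tensor product) *)
Definition multilinear (tau : cfamily A B f) : Prop :=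
  forall p, valid_index n p -> forall (m : M) (a : forall j : 'I_(size p), A (nth 0%N p j) m)
    (j : 'I_(size p)) (c : R) (x y : A (nth 0%N p j) m),
    tau p m (dfwith a (c *: x + y)) = c *: tau p m (dfwith a x) + tau p m (dfwith a y).

Definition odd_inv (p : seq nat) (s : 'S_(size p)) : nat :=
  #|[set ij : 'I_(size p) * 'I_(size p) |
      [&& (ij.1 < ij.2)%N, (s ij.2 < s ij.1)%N & odd (nth 0%N p ij.1)]]|.

(* symmetric in arguments from A_j, j even, skew-symmetric for j odd *)
Definition graded_symmetric (tau : cfamily A B f) : Prop :=
  forall p, valid_index n p -> forall (m : M) (s : 'S_(size p))
    (Hs : forall j, nth 0%N p (s j) = nth 0%N p j)
    (a : forall j : 'I_(size p), A (nth 0%N p j) m),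
    tau p m (fun j => eq_rect _ (fun i => A i m) (a (s j)) _ (Hs j))
    = (-1) ^+ odd_inv s *: tau p m a.

Definition sym_morphism (tau : cfamily A B f) : Prop :=
  multilinear tau /\ graded_symmetric tau.

(* The map E^A([n]) -> E^B([n]) over m induced by tau: an element of
   E^A([n]) over m is a cfamily (a_I)_I, a_I in A_{#I} (only nonempty I
   matter), and
   tau([n])((a_I)_I) = (sum_{rho in P(I)} sgn(rho) tau_{|rho|}(a_{I_1},..,a_{I_k}))_I. *)
Definition mor_map (tau : cfamily A B f) (m : M) (a : forall I : {set 'I_n}, A #|I| m)
  : forall I : {set 'I_n}, B #|I| (f m) :=
  fun I => \sum_(P : {set {set 'I_n}} | partition P I)
    psgn R (corder P) *:
      vcast (fun i => B i (f m)) #|I|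
        (tau [seq #|X| | X : {set 'I_n} <- corder P] m
           (fun j => vcast (fun i => A i m) _ (a (nth set0 (corder P) j)))).

End Morphisms.

(* K_j : the j-th block of rho^p_can = consecutive blocks of sizes i_1,..,i_k *)
Definition blk n (p : seq nat) (j : nat) : {set 'I_n} :=
  [set i : 'I_n | (sumn (take j p) <= i < sumn (take j.+1 p))%N].

Definition pad (R : pzRingType) n (M : Type) (A : nat -> M -> lmodType R) (p : seq nat) (m : M)
  (x : forall j : 'I_(size p), A (nth 0%N p j) m) : forall I : {set 'I_n}, A #|I| m :=
  fun I => \sum_(j < size p | I == blk n p j) vcast (fun i => A i m) #|I| (x j).

Arguments pad {R} n {M A p m} x.

(* the p-component of a morphism given by its maps F on E([n]) over h:
   F_p(x_1,..,x_k) = entry at {0,..,sum p - 1} of F(pad x) *)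
Definition component (R : pzRingType) n (M P : Type) (A : nat -> M -> lmodType R)
  (C : nat -> P -> lmodType R) (h : M -> P)
  (F : forall m : M, (forall I : {set 'I_n}, A #|I| m) -> forall I : {set 'I_n}, C #|I| (h m))
  (p : seq nat) (m : M) (x : forall j : 'I_(size p), A (nth 0%N p j) m) : C (sumn p) (h m) :=
  vcast (fun i => C i (h m)) (sumn p) (F m (pad n x) [set i : 'I_n | (i < sumn p)%N]).

Definition comp_formula (R : pzRingType) n (M N P : Type) (A : nat -> M -> lmodType R)
  (B : nat -> N -> lmodType R) (C : nat -> P -> lmodType R) (f : M -> N) (g : N -> P)
  (eta : cfamily A B f) (tau : cfamily B C g)
  (p : seq nat) (m : M) (x : forall j : 'I_(size p), A (nth 0%N p j) m) : C (sumn p) (g (f m)) :=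
  let a := pad n x in
  (* tuples (rho_1,..,rho_l) of canonically ordered partitions whose blocks
     together are K_1,..,K_k, with U rho_1 < ... < U rho_l: these are the
     partitions Pi of {K_1,..,K_k} into groups, groups ordered by their
     unions, each group listed in canonical order *)
  \sum_(Pi : {set {set {set 'I_n}}} | partition Pi [set blk n p j | j : 'I_(size p)])
    let groups := sort (fun G H => set_le (cover G) (cover H)) (enum Pi) in
    let rhos := [seq corder G | G <- groups] in
    psgn R (flatten rhos) *:
      vcast (fun i => C i (g (f m))) (sumn p)
        (tau [seq #|cover G| | G : {set {set 'I_n}} <- groups] (f m)
           (fun j => vcast (fun i => B i (f m)) _
              (eta [seq #|X| | X : {set 'I_n} <- nth [::] rhos j] m
                 (fun i => vcast (fun i => A i m) _ (a (nth set0 (nth [::] rhos j) i)))))).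

Arguments mor_map {R} n {M N A B f} tau m a I.
Arguments multilinear {R} n {M N A B f} tau.
Arguments graded_symmetric {R} n {M N A B f} tau.
Arguments sym_morphism {R} n {M N A B f} tau.
Arguments component {R} n {M P A C} h F p m x.
Arguments comp_formula {R} n {M N P A B C f g} eta tau p m x.

(* Main.v *)
Require Import Defs.
From HB Require Import structures.
From mathcomp Require Import all_boot all_order all_algebra all_fingroup.
From mathcomp Require Import reals.
From mathcomp Require Import zify.
From Stdlib Require Import FunctionalExtensionality.
Import GRing.Theory.

Module M1.
Unset Implicit Arguments.
Local Open Scope ring_scope.

Section Vcast.
Variables (R : pzRingType) (V : nat -> lmodType R).
Lemma vcast_id i (x : V i) : vcast V i x = x.
Proof. rewrite /vcast; case: eqP => // e; by rewrite (eq_irrelevance e erefl). Qed.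
Lemma vcastK i j k (x : V i) : i = j -> vcast V k (vcast V j x) = vcast V k x.
Proof. by move=> e; subst j; rewrite vcast_id. Qed.
Lemma vcastZ i j c (x : V i) : vcast V j (c *: x) = c *: vcast V j x.
Proof. rewrite /vcast; case: eqP => [e|_]; last by rewrite scaler0. by case: j / e. Qed.
Lemma vcast0 i j : vcast V j (0 : V i) = 0.
Proof. rewrite /vcast; case: eqP => [e|_] //. by case: j / e. Qed.
Lemma vcast_sum i j (I : Type) (r : seq I) (P : pred I) (F : I -> V i) :
  vcast V j (\sum_(k <- r | P k) F k) = \sum_(k <- r | P k) vcast V j (F k).
Proof. rewrite /vcast; case: eqP => [e|_]; first by case: j / e. by rewrite big1. Qed.
End Vcast.

Section Multi.
Variables (R : comPzRingType) (n : nat) (M N : Type).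
Variables (A : nat -> M -> lmodType R) (B : nat -> N -> lmodType R) (f : M -> N).
Variable tau : cfamily A B f.
Hypothesis Hml : multilinear n tau.

Lemma tau_dfwith0 p (Hp : valid_index n p) m a (j : 'I_(size p)) :
  tau p m (dfwith a (0 : A (nth 0%N p j) m)) = 0.
Proof.
have H := Hml p Hp m a j 1 0 0.
rewrite !scale1r !addr0 in H.
set t := tau _ _ _ in H *.
by apply: (GRing.Theory.addrI t); rewrite -H addr0.
Qed.

Lemma tau_zero p (Hp : valid_index n p) m a (j : 'I_(size p)) :
  a j = 0 -> tau p m a = 0.
Proof.
move=> aj; rewrite -(tau_dfwith0 p Hp m a j); congr (tau p m _).
apply: functional_extensionality_dep => k; rewrite /dfwith; case: eqP => // e.
by case: k / e.
Qed.

Lemma tau_scale p (Hp : valid_index n p) m (c : 'I_(size p) -> R)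
  (y : forall j : 'I_(size p), A (nth 0%N p j) m) :
  tau p m (fun j => c j *: y j) = (\prod_(j < size p) c j) *: tau p m y.
Proof.
suff H : forall t, (t <= size p)%N ->
  tau p m (fun j => if (j < t)%N then c j *: y j else y j)
  = (\prod_(j < size p | (j < t)%N) c j) *: tau p m y.
  have := H _ (leqnn _).
  have -> : (fun j : 'I_(size p) => if (j < size p)%N then c j *: y j else y j)
     = (fun j => c j *: y j) by apply: functional_extensionality_dep => j; rewrite ltn_ord.
  by move=> ->; congr (_ *: _); apply: eq_bigl => j; rewrite ltn_ord.
elim=> [|t IH] ht.
  have -> : (fun j : 'I_(size p) => if (j < 0)%N then c j *: y j else y j) = y.
    by apply: functional_extensionality_dep => j.
  by rewrite big_pred0 ?scale1r.
set jt : 'I_(size p) := Ordinal ht.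
set ft := (fun j : 'I_(size p) => if (j < t)%N then c j *: y j else y j).
have E1 : (fun j : 'I_(size p) => if (j < t.+1)%N then c j *: y j else y j)
   = dfwith ft (c jt *: y jt + 0).
  apply: functional_extensionality_dep => k; rewrite /dfwith; case: eqP => [e|ne].
    by case: k / e; rewrite /= ltnSn addr0.
  rewrite /ft ltnS leq_eqVlt; case: eqP => // e; case: ne; exact: val_inj.
have E2 : dfwith ft (y jt) = ft.
  apply: functional_extensionality_dep => k; rewrite /dfwith; case: eqP => // e.
  by case: k / e; rewrite /ft /= ltnn.
rewrite E1 Hml // E2 tau_dfwith0 // addr0 IH ?(ltnW ht) // scalerA.
congr (_ *: _); rewrite [RHS](bigD1 jt) /= ?ltnSn //; congr (_ * _).
apply: eq_bigl => k; rewrite ltnS; case: (ltngtP k t) => hk //=.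
  by apply/esym/eqP => e; move: hk; rewrite e /= ltnn.
by apply/esym/negbTE; rewrite negbK; apply/eqP/val_inj.
Qed.
End Multi.
Arguments tau_dfwith0 {R n M N A B f tau} Hml {p} Hp m a j.
Arguments tau_zero {R n M N A B f tau} Hml {p} Hp m a j _.
Arguments tau_scale {R n M N A B f tau} Hml {p} Hp m c y.

End M1.
Import M1.

Module M2.
Set Implicit Arguments. Unset Strict Implicit.
Set Implicit Arguments. Unset Strict Implicit.

Lemma lex_lt_irr s : lex_lt s s = false.
Proof. by elim: s => //= x s ->; rewrite ltnn eqxx. Qed.

Lemma lex_lt_trans s t u : lex_lt s t -> lex_lt t u -> lex_lt s u.
Proof.
elim: s t u => [|x s IH] [|y t] [|z u] //=.
case/orP=> [xy|/andP[/eqP-> st]]; case/orP=> [yz|/andP[/eqP<- tu]].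
- by rewrite (ltn_trans xy yz).
- by rewrite xy.
- by rewrite yz.
- by rewrite eqxx (IH _ _ st tu) orbT.
Qed.

Lemma lex_lt_total s t : s != t -> lex_lt s t || lex_lt t s.
Proof.
elim: s t => [|x s IH] [|y t] //=.
case: (ltngtP x y) => //= e; subst y; rewrite eqseq_cons eqxx /=.
by move/IH.
Qed.

Lemma elems_mem n (X : {set 'I_n}) (i : 'I_n) : (val i \in elems X) = (i \in X).
Proof. by rewrite /elems mem_sort (mem_map val_inj) mem_enum. Qed.

Lemma elems_inj n : injective (@elems n).
Proof.
move=> X Y e; apply/setP => i; by rewrite -!elems_mem e.
Qed.

Lemma elems_sorted n (X : {set 'I_n}) : sorted leq (elems X).
Proof. exact: sort_sorted leq_total _. Qed.

Lemma elems_uniq n (X : {set 'I_n}) : uniq (elems X).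
Proof. by rewrite /elems sort_uniq (map_inj_uniq val_inj) enum_uniq. Qed.

Lemma set_lt_irr n (X : {set 'I_n}) : set_lt X X = false.
Proof. by rewrite /set_lt ltnn eqxx lex_lt_irr. Qed.

Lemma set_lt_trans n (X Y Z : {set 'I_n}) : set_lt X Y -> set_lt Y Z -> set_lt X Z.
Proof.
rewrite /set_lt; case: (ltngtP #|X| #|Y|) => //= hXY; case: (ltngtP #|Y| #|Z|) => //= hYZ.
- by rewrite (ltn_trans hXY hYZ).
- by rewrite -hYZ hXY.
- by rewrite hXY hYZ.
- by rewrite hXY hYZ ltnn eqxx /=; apply: lex_lt_trans.
Qed.

Lemma set_le_refl n : reflexive (@set_le n).
Proof. by move=> X; rewrite /set_le eqxx. Qed.

Lemma set_le_trans n : transitive (@set_le n).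
Proof.
move=> Y X Z; rewrite /set_le; case/orP=> [/eqP->//|hXY]; case/orP=> [/eqP<-|hYZ].
  by rewrite hXY orbT.
by rewrite (set_lt_trans hXY hYZ) orbT.
Qed.

Lemma set_le_anti n : antisymmetric (@set_le n).
Proof.
move=> X Y; rewrite /set_le; case: (eqVneq X Y) => //= _ /andP[h1 h2].
by have := set_lt_trans h1 h2; rewrite set_lt_irr.
Qed.

Lemma set_le_total n : total (@set_le n).
Proof.
move=> X Y; rewrite /set_le; case: (eqVneq X Y) => //= nXY.
rewrite /set_lt; case: (ltngtP #|X| #|Y|) => //= _.
apply: lex_lt_total; apply: contra_neq nXY; exact: elems_inj.
Qed.

Lemma set_le_card n (X Y : {set 'I_n}) : set_le X Y -> (#|X| <= #|Y|)%N.
Proof.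
rewrite /set_le /set_lt; case/orP=> [/eqP->//|/orP[/ltnW//|/andP[/eqP->//]]].
Qed.

Lemma corder_sorted n (P : {set {set 'I_n}}) : sorted (@set_le n) (corder P).
Proof. exact: sort_sorted (@set_le_total n) _. Qed.

Lemma corder_perm n (P : {set {set 'I_n}}) : perm_eq (corder P) (enum P).
Proof. by rewrite /corder perm_sort. Qed.

Lemma mem_corder n (P : {set {set 'I_n}}) X : (X \in corder P) = (X \in P).
Proof. by rewrite (perm_mem (corder_perm P)) mem_enum. Qed.

Lemma size_corder n (P : {set {set 'I_n}}) : size (corder P) = #|P|.
Proof. by rewrite (perm_size (corder_perm P)) cardE. Qed.

Lemma corder_uniq n (P : {set {set 'I_n}}) : uniq (corder P).
Proof. by rewrite (perm_uniq (corder_perm P)) enum_uniq. Qed.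

Lemma big_corder (T : Type) (idx : T) (op : Monoid.com_law idx) n
   (P : {set {set 'I_n}}) (F : {set 'I_n} -> T) :
  \big[op/idx]_(X <- corder P) F X = \big[op/idx]_(X in P) F X.
Proof. by rewrite (perm_big _ (corder_perm P)) big_enum. Qed.

Lemma corder_unique n (P : {set {set 'I_n}}) s :
  sorted (@set_le n) s -> uniq s -> s =i P -> corder P = s.
Proof.
move=> ss us ms; apply: (sorted_eq (@set_le_trans n) (@set_le_anti n)) => //.
  exact: corder_sorted.
apply: uniq_perm; [exact: corder_uniq | exact: us | move=> X; by rewrite mem_corder ms].
Qed.

Lemma valid_corder n (P : {set {set 'I_n}}) (I : {set 'I_n}) :
  partition P I -> I != set0 -> valid_index n [seq #|X| | X : {set 'I_n} <- corder P].
Proof.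
move=> pP I0; have /and3P[/eqP cP tP s0P] := pP.
apply/and4P; split.
- rewrite size_map size_corder card_gt0; apply: contraNneq I0 => P0.
  by rewrite -cP P0 /cover big_set0.
- apply/allP => k /mapP[X]; rewrite mem_corder => XP ->; rewrite card_gt0.
  by apply: contraNneq s0P => <-.
- rewrite sorted_map; apply: sub_sorted (corder_sorted P) => X Y; exact: set_le_card.
- rewrite sumnE big_map big_corder -(card_partition pP).
  by apply: leq_trans (max_card _) _; rewrite card_ord.
Qed.

Lemma sumn_corder n (P : {set {set 'I_n}}) (I : {set 'I_n}) :
  partition P I -> sumn [seq #|X| | X : {set 'I_n} <- corder P] = #|I|.
Proof. by move=> pP; rewrite sumnE big_map big_corder -(card_partition pP). Qed.

Lemma triv_eq (T : finType) (P : {set {set T}}) A B x :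
  trivIset P -> A \in P -> B \in P -> x \in A -> x \in B -> A = B.
Proof.
move=> /trivIsetP tP AP BP xA xB; apply/eqP; apply: contraTT isT => nAB.
have := tP A B AP BP nAB => /disjointFr/(_ xA).
by rewrite xB.
Qed.

End M2.
Import M2.

Module M3.
Set Implicit Arguments. Unset Strict Implicit.
Set Implicit Arguments. Unset Strict Implicit.

Lemma card_set_nat n (P : pred nat) : #|[set i : 'I_n | P i]| = count P (iota 0 n).
Proof.
rewrite -sum1_card (eq_bigl (fun i : 'I_n => P i)); last by move=> i; rewrite inE.
by rewrite -(big_mkord P (fun _ => 1%N)) sum1_count /index_iota subn0.
Qed.

Lemma card_interval n a b : (b <= n)%N -> #|[set i : 'I_n | (a <= i < b)%N]| = (b - a)%N.
Proof.
move=> bn; rewrite (card_set_nat n (fun i => a <= i < b)%N) -size_filter.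
rewrite (eq_filter (a2 := predI (fun i => a <= i)%N (fun i => i < b)%N)); last first.
  by move=> i /=.
rewrite filter_predI (filter_iota_ltn 0 bn) size_filter.
have := count_predC (fun i => i < a)%N (iota 0 b).
rewrite (eq_count (a2 := predC (fun i => i < a)%N) (a1 := fun i => a <= i)%N); last first.
  by move=> i /=; rewrite -leqNgt.
case: (leqP a b) => ab.
  rewrite -size_filter (filter_iota_ltn 0 ab) !size_iota => e.
  by apply/eqP; rewrite -(eqn_add2l a) e subnKC.
rewrite (@eq_in_count _ (fun i => i < a)%N predT); last first.
  by move=> i; rewrite mem_iota add0n => /andP[_ h]; apply: ltn_trans h ab.
rewrite count_predT size_iota => /eqP; rewrite -[X in _ == X]addn0 eqn_add2l => /eqP ->.
by apply/esym/eqP; rewrite subn_eq0 ltnW.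
Qed.

Lemma sumn_take_mono (p : seq nat) j k : (j <= k)%N -> (sumn (take j p) <= sumn (take k p))%N.
Proof.
move=> jk; rewrite -(subnKC jk) takeD sumn_cat; exact: leq_addr.
Qed.

Lemma sumn_take_le (p : seq nat) j : (sumn (take j p) <= sumn p)%N.
Proof. by rewrite -{2}(cat_take_drop j p) sumn_cat leq_addr. Qed.

Lemma sumn_takeS (p : seq nat) j : (j < size p)%N ->
  sumn (take j.+1 p) = (sumn (take j p) + nth 0 p j)%N.
Proof. by move=> jp; rewrite (take_nth 0 jp) -cats1 sumn_cat /= addn0. Qed.

Section Blocks.
Variables (n : nat) (p : seq nat).
Hypothesis Hp : valid_index n p.

Let Hsum : (sumn p <= n)%N.
Proof. by case/and4P: Hp. Qed.
Let Hpos j : (j < size p)%N -> (0 < nth 0 p j)%N.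
Proof. by case/and4P: Hp => _ /allP H _ _ jp; apply: H; rewrite mem_nth. Qed.

Definition I0 := [set i : 'I_n | (i < sumn p)%N].
Definition Kset := [set blk n p j | j : 'I_(size p)].

Lemma in_blk j (i : 'I_n) : (i \in blk n p j) = (sumn (take j p) <= i < sumn (take j.+1 p))%N.
Proof. by rewrite inE. Qed.

Lemma card_blk (j : 'I_(size p)) : #|blk n p j| = nth 0 p j.
Proof.
rewrite /blk card_interval; first by rewrite sumn_takeS // addKn.
exact: leq_trans (sumn_take_le _ _) Hsum.
Qed.

Lemma card_I0 : #|I0| = sumn p.
Proof. have := card_interval 0 Hsum; rewrite subn0 => <-; apply: eq_card => i; by rewrite !inE. Qed.

Lemma blk_n0 (j : 'I_(size p)) : blk n p j != set0.
Proof. by rewrite -card_gt0 card_blk Hpos. Qed.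

Lemma blk_disj (j k : 'I_(size p)) (i : 'I_n) :
  i \in blk n p j -> i \in blk n p k -> j = k.
Proof.
wlog jk : j k / (j <= k)%N.
  move=> H; case: (leqP j k) => [/H//|/ltnW kj ij ik]; by rewrite (H k j kj ik ij).
rewrite !in_blk => /andP[_ h1] /andP[h2 _]; apply/val_inj/eqP; rewrite eqn_leq jk /=.
rewrite leqNgt; apply/negP => jk'.
have := sumn_take_mono p jk'; move: (leq_ltn_trans h2 h1); rewrite leqNgt => /negP; apply.
Qed.

Lemma blk_inj : injective (blk n p : 'I_(size p) -> {set 'I_n}).
Proof.
move=> j k e; have /set0Pn[i ij] := blk_n0 j.
by apply: (blk_disj ij); rewrite -e.
Qed.

Lemma blk_sub (j : 'I_(size p)) : blk n p j \subset I0.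
Proof.
apply/subsetP => i; rewrite in_blk inE => /andP[_ h].
exact: leq_trans h (sumn_take_le _ _).
Qed.

Lemma Kset_triv : trivIset Kset.
Proof.
apply/trivIsetP => X Y /imsetP[j _ ->] /imsetP[k _ ->] ne.
apply/pred0P => i /=; apply/negP => /andP[ij ik].
by move: ne; rewrite (blk_disj ij ik) eqxx.
Qed.

Lemma Kset_n0 : set0 \notin Kset.
Proof. by apply/imsetP => -[j _ /esym e]; move: (blk_n0 j); rewrite e eqxx. Qed.

Lemma Kset_n0' K : K \in Kset -> K != set0.
Proof. by move=> KK; apply: contraNneq Kset_n0 => <-. Qed.

Lemma cover_Kset : cover Kset = I0.
Proof.
apply/eqP; rewrite eqEcard; apply/andP; split.
  apply/bigcupsP => X /imsetP[j _ ->]; exact: blk_sub.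
move: Kset_triv; rewrite /trivIset => /eqP <-.
rewrite card_I0 big_imset /=; last by move=> j k _ _; apply: blk_inj.
rewrite (eq_bigr (fun j : 'I_(size p) => nth 0 p j)); last by move=> j _; rewrite card_blk.
by rewrite sumnE (big_nth 0) big_mkord.
Qed.

Lemma Kset_part : partition Kset I0.
Proof. by rewrite /partition cover_Kset eqxx Kset_triv Kset_n0. Qed.

Lemma I0_n0 : I0 != set0.
Proof.
rewrite -card_gt0 card_I0; case/and4P: Hp => s0 /allP pos _ _.
case: p s0 pos => //= x s _ h; rewrite ltn_addr //; apply: h; exact: mem_head.
Qed.

Section Pad.
Variables (R : pzRingType) (M : Type) (A : nat -> M -> lmodType R) (m : M).
Variable x : forall j : 'I_(size p), A (nth 0%N p j) m.

Lemma pad_blk (j : 'I_(size p)) :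
  pad n x (blk n p j) = vcast (fun i => A i m) #|blk n p j| (x j).
Proof.
rewrite /pad (big_pred1 j) // => k /=; rewrite eq_sym; apply/eqP/eqP => [/blk_inj|->]//.
Qed.

Lemma pad_out X : X \notin Kset -> pad n x X = 0%R.
Proof.
move=> XK; rewrite /pad big_pred0 // => k; apply/negP => /eqP e; case/imsetP: XK.
by exists k.
Qed.
End Pad.
End Blocks.

End M3.
Import M3.

Module M4.
Set Implicit Arguments. Unset Strict Implicit.
Set Implicit Arguments. Unset Strict Implicit.
Local Open Scope ring_scope.

Section GX.
Variables (n : nat) (p : seq nat).
Hypothesis Hp : valid_index n p.

Definition GX (X : {set 'I_n}) := [set K in Kset n p | K \subset X].

Lemma GX_sub X : GX X \subset Kset n p.
Proof. by apply/subsetP => K; rewrite inE => /andP[]. Qed.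

Lemma part_sub_iff Q X :
  (partition Q X && (Q \subset Kset n p)) = (Q == GX X) && (cover (GX X) == X).
Proof.
apply/idP/idP.
  case/andP => pQ sQ; have /and3P[/eqP cQ tQ nQ] := pQ.
  have eQ : Q = GX X.
    apply/setP => K; rewrite inE; apply/idP/idP.
      move=> KQ; rewrite (subsetP sQ _ KQ) -cQ /=; exact: bigcup_sup KQ.
    case/andP => KK KX; have /set0Pn[i iK] := Kset_n0' Hp KK.
    have : i \in cover Q by rewrite cQ (subsetP KX).
    case/bigcupP => K' K'Q iK'.
    by rewrite (triv_eq (Kset_triv n p) KK (subsetP sQ _ K'Q) iK iK').
  by rewrite -eQ eqxx cQ eqxx.
case/andP => /eqP -> /eqP cG; rewrite GX_sub andbT /partition cG eqxx.
rewrite (trivIsetS (GX_sub X) (Kset_triv n p)) /=; rewrite inE negb_and.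
by rewrite (negbTE (Kset_n0 Hp)).
Qed.

Unset Implicit Arguments.
Section MorPad.
Variables (R : comPzRingType) (M N : Type).
Variables (A : nat -> M -> lmodType R) (B : nat -> N -> lmodType R) (f : M -> N).
Variable eta : cfamily A B f.
Hypothesis Hml : multilinear n eta.
Variables (m : M) (x : forall j : 'I_(size p), A (nth 0%N p j) m).

Lemma mor_map_pad X :
  mor_map n eta m (pad n x) X =
  if cover (GX X) == X then
    psgn R (corder (GX X)) *:
      vcast (fun i => B i (f m)) #|X|
        (eta [seq #|Y| | Y : {set 'I_n} <- corder (GX X)] m
           (fun j => vcast (fun i => A i m) _ (pad n x (nth set0 (corder (GX X)) j))))
  else 0.
Proof.
rewrite /mor_map; cbv beta; rewrite (bigID (fun Q : {set {set 'I_n}} => Q \subset Kset n p)) /= [Z in _ + Z]big1 ?addr0; last first.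
  move=> Q /andP[pQ /subsetPn[K KQ KK]].
  have /and3P[/eqP cQ tQ nQ] := pQ.
  have Xn0 : X != set0.
    have /set0Pn[i iK] : K != set0 by apply: contraNneq nQ => <-.
    by apply/set0Pn; exists i; rewrite -cQ; apply/bigcupP; exists K.
  have hv := valid_corder pQ Xn0.
  have hi : (index K (corder Q) < size [seq #|Y| | Y : {set 'I_n} <- corder Q])%N.
    by rewrite size_map index_mem mem_corder.
  rewrite (tau_zero Hml hv _ _ (Ordinal hi)) ?vcast0 ?scaler0 //=.
  by rewrite nth_index ?mem_corder // pad_out // vcast0.
case: ifP => h.
  by rewrite (big_pred1 (GX X)) // => Q; rewrite /= part_sub_iff h andbT.
by rewrite big_pred0 // => Q; rewrite part_sub_iff h andbF.
Qed.
End MorPad.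
End GX.

End M4.
Import M4.

Module M5.
Set Implicit Arguments. Unset Strict Implicit.
Set Implicit Arguments. Unset Strict Implicit.

Section Bij.
Variables (n : nat) (p : seq nat).
Hypothesis Hp : valid_index n p.
Local Notation Ks := (Kset n p).
Local Notation GX := (GX p).

Definition hmap (Pi : {set {set {set 'I_n}}}) : {set {set 'I_n}} := [set cover G | G in Pi].
Definition hmap' (P : {set {set 'I_n}}) : {set {set {set 'I_n}}} := [set GX X | X in P].
Definition good (P : {set {set 'I_n}}) := [forall X in P, cover (GX X) == X].

Lemma GX_cover (G : {set {set 'I_n}}) : G \subset Ks -> GX (cover G) = G.
Proof.
move=> sG; apply/setP => K; rewrite inE; apply/idP/idP.
  case/andP => KK /subsetP KG; have /set0Pn[i iK] := Kset_n0' Hp KK.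
  case/bigcupP: (KG _ iK) => K' K'G iK'.
  by rewrite (triv_eq (Kset_triv n p) KK (subsetP sG _ K'G) iK iK').
by move=> KG; rewrite (subsetP sG _ KG) bigcup_sup.
Qed.

Section PartPi.
Variable Pi : {set {set {set 'I_n}}}.
Hypothesis pPi : partition Pi Ks.

Lemma Pi_sub (G : {set {set 'I_n}}) : G \in Pi -> G \subset Ks.
Proof. by case/and3P: pPi => /eqP <- _ _ GP; apply: bigcup_sup. Qed.

Lemma Pi_n0 (G : {set {set 'I_n}}) : G \in Pi -> cover G != set0.
Proof.
case/and3P: pPi => _ _ n0 GP; have /set0Pn[K KG] : G != set0.
  by apply: contraNneq n0 => <-.
have /set0Pn[i iK] := Kset_n0' Hp (subsetP (Pi_sub GP) _ KG).
by apply/set0Pn; exists i; apply/bigcupP; exists K.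
Qed.

Lemma cover_inj : {in Pi &, injective (@cover _)}.
Proof.
move=> G H GP HP e; have /set0Pn[i iG] := Pi_n0 GP.
have := iG; rewrite e => iH.
case/bigcupP: iG => K KG iK; case/bigcupP: iH => K' K'H iK'.
have eK := triv_eq (Kset_triv n p) (subsetP (Pi_sub GP) _ KG) (subsetP (Pi_sub HP) _ K'H) iK iK'.
subst K'; case/and3P: pPi => _ tPi _.
have [y yK] : exists y, y \in K by have /set0Pn[y ?] := Kset_n0' Hp (subsetP (Pi_sub GP) _ KG); exists y.
exact: (triv_eq tPi GP HP KG K'H).
Qed.

Lemma hmap_part : partition (hmap Pi) (I0 n p).
Proof.
case/and3P: pPi => /eqP cPi tPi n0Pi.
apply/and3P; split.
- apply/eqP/setP => i; rewrite -cover_Kset // -cPi cover_imset; apply/bigcupP/bigcupP.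
    case=> G GP /bigcupP[K KG iK]; exists K => //; apply/bigcupP; by exists G.
  case=> K /bigcupP[G GP KG] iK; exists G => //; apply/bigcupP; by exists K.
- apply/trivIsetP => X Y /imsetP[G GP ->] /imsetP[H HP ->] ne.
  apply/pred0P => i /=; apply/negP => /andP[iG iH].
  case/bigcupP: iG => K KG iK; case/bigcupP: iH => K' K'H iK'.
  have eK := triv_eq (Kset_triv n p) (subsetP (Pi_sub GP) _ KG) (subsetP (Pi_sub HP) _ K'H) iK iK'.
  subst K'; by move: ne; rewrite (triv_eq tPi GP HP KG K'H) eqxx.
- apply/imsetP => -[G GP e]; by move: (Pi_n0 GP); rewrite -e eqxx.
Qed.

Lemma hmap_good : good (hmap Pi).
Proof. apply/forall_inP => X /imsetP[G GP ->]; by rewrite GX_cover ?Pi_sub. Qed.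

Lemma hmap'K : hmap' (hmap Pi) = Pi.
Proof.
rewrite /hmap' /hmap -imset_comp -[RHS]imset_id; apply: eq_in_imset => G GP /=.
exact: GX_cover (Pi_sub GP).
Qed.

Definition groups := sort (fun G H : {set {set 'I_n}} => set_le (cover G) (cover H)) (enum Pi).

Lemma corder_hmap : corder (hmap Pi) = [seq cover G | G <- groups].
Proof.
apply: corder_unique.
- rewrite sorted_map; apply: sort_sorted => G H; exact: set_le_total.
- rewrite map_inj_in_uniq ?sort_uniq ?enum_uniq //.
  by move=> G H; rewrite !mem_sort !mem_enum; apply: cover_inj.
- move=> X; apply/mapP/imsetP => -[G GP ->]; exists G => //;
    move: GP; by rewrite ?mem_sort ?mem_enum.
Qed.
End PartPi.

Section PartP.
Variable P : {set {set 'I_n}}.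
Hypothesis pP : partition P (I0 n p).
Hypothesis gP : good P.

Lemma hmapK : hmap (hmap' P) = P.
Proof.
rewrite /hmap' /hmap -imset_comp -[RHS]imset_id; apply: eq_in_imset => X XP /=.
by move/forall_inP: gP => /(_ X XP)/eqP.
Qed.

Lemma hmap'_part : partition (hmap' P) Ks.
Proof.
case/and3P: pP => /eqP cP tP n0P; have gX := fun X XP => eqP (forall_inP gP X XP).
apply/and3P; split.
- apply/eqP/setP => K; apply/bigcupP/idP.
    by case=> G /imsetP[X XP ->]; rewrite inE => /andP[].
  move=> KK; have /set0Pn[i iK] := Kset_n0' Hp KK.
  have : i \in cover P.
    rewrite cP; case/imsetP: KK => j _ e; rewrite e in iK; exact: subsetP (blk_sub n j) _ iK.
  case/bigcupP => X XP iX; exists (GX X); first by apply/imsetP; exists X.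
  move: iX; rewrite -{1}(gX X XP) => /bigcupP[K' K'G iK'].
  have K'K : K' \in Ks by move: K'G; rewrite inE => /andP[].
  by rewrite (triv_eq (Kset_triv n p) KK K'K iK iK').
- apply/trivIsetP => G H /imsetP[X XP ->] /imsetP[Y YP ->] ne.
  apply/pred0P => K /=; apply/negP => /andP; rewrite !inE => -[/andP[KK KX] /andP[_ KY]].
  have /set0Pn[i iK] := Kset_n0' Hp KK.
  by move: ne; rewrite (triv_eq tP XP YP (subsetP KX _ iK) (subsetP KY _ iK)) eqxx.
- apply/imsetP => -[X XP e]; move: (gX X XP); rewrite -e /cover big_set0 => eX.
  by move: n0P; rewrite eX XP.
Qed.
End PartP.
End Bij.

End M5.
Import M5.

Module M6.
Set Implicit Arguments. Unset Strict Implicit.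
Set Implicit Arguments. Unset Strict Implicit.

Fixpoint invc (s : seq nat) : nat :=
  if s is x :: s' then (count (fun y => y < x) s' + invc s')%N else 0%N.

Lemma count_nth_sum (a : pred nat) s : count a s = (\sum_(j < size s) a (nth 0 s j))%N.
Proof. elim: s => [|x s IH]; first by rewrite big_ord0. by rewrite big_ord_recl /= IH. Qed.

Lemma inv_countE s : inv_count s = invc s.
Proof.
elim: s => [|x s IH]; first by rewrite /inv_count big_ord0.
rewrite /inv_count /= big_ord_recl /= -IH /inv_count; congr addn.
  rewrite big_mkcond big_ord_recl /= add0n count_nth_sum.
  by apply: eq_bigr => j _; rewrite add0n.
apply: eq_bigr => i _; rewrite big_mkcond big_ord_recl /= [RHS]big_mkcond /bump /= !add1n.
by apply: eq_bigr => j _; rewrite /bump /= !add1n ltnS.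
Qed.

Definition cross (s t : seq nat) := (\sum_(x <- s) count (fun y => y < x) t)%N.

Lemma invc_cat s t : invc (s ++ t) = (invc s + invc t + cross s t)%N.
Proof.
elim: s => [|x s IH] /=; first by rewrite /cross big_nil addn0.
rewrite IH count_cat /cross big_cons.
lia.
Qed.

Lemma cross_perm s s' t t' : perm_eq s s' -> perm_eq t t' -> cross s t = cross s' t'.
Proof.
move=> ss tt; rewrite /cross (perm_big _ ss); apply: eq_bigr => x _.
by move/seq.permP: tt => ->.
Qed.

Lemma invc_flatten (ls ms : seq (seq nat)) :
  size ls = size ms -> (forall i, perm_eq (nth [::] ls i) (nth [::] ms i)) ->
  (invc (flatten ls) + sumn (map invc ms) = invc (flatten ms) + sumn (map invc ls))%N.
Proof.
elim: ls ms => [|l ls IH] [|m ms] //= [e] H.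
have Hl := H 0%N; have Hr : forall i, perm_eq (nth [::] ls i) (nth [::] ms i) by move=> i; apply: (H i.+1).
have IH' := IH ms e Hr.
have pf : perm_eq (flatten ls) (flatten ms).
  clear IH IH' H Hl; elim: ls ms e Hr => [|l' ls' IH2] [|m' ms'] //= [e'] H'.
  by apply: perm_cat; [apply: (H' 0%N) | apply: IH2 => // i; apply: (H' i.+1)].
rewrite !invc_cat (cross_perm Hl pf).
move: IH'; set a := invc (flatten ls); set b := invc (flatten ms).
set cr := cross _ _ => hh.
lia.
Qed.

Lemma count_elems n (X : {set 'I_n}) (a : pred nat) :
  count a (elems X) = (\sum_(i in X | a i) 1)%N.
Proof.
have ps : perm_eq (elems X) [seq val i | i <- enum X] by rewrite /elems perm_sort.
by rewrite (seq.permP ps) count_map -sum1_count big_enum_cond.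
Qed.

Lemma perm_elems_cover n (G : {set {set 'I_n}}) : trivIset G ->
  perm_eq (flatten [seq elems X | X <- corder G]) (elems (cover G)).
Proof.
move=> tG; apply/seq.permP => a; rewrite count_flatten -map_comp count_elems.
rewrite big_trivIset_cond // sumnE big_map big_corder.
by apply: eq_bigr => X _ /=; rewrite count_elems.
Qed.

Lemma invc_sorted s : sorted leq s -> invc s = 0%N.
Proof.
elim: s => [|x s IH] //= ps; rewrite IH ?(path_sorted ps) // addn0.
have := order_path_min leq_trans ps => /allP H.
apply/eqP; rewrite -leqn0 leqNgt -has_count; apply/hasP => -[y ys] /=.
by rewrite ltnNge H.
Qed.

Lemma flatten_flatten (T : Type) (sss : seq (seq (seq T))) :
  flatten (flatten sss) = flatten (map flatten sss).
Proof. by elim: sss => //= ss sss IH; rewrite flatten_cat IH. Qed.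

Local Open Scope ring_scope.
Lemma psgn_groups (R : comPzRingType) n (grp : seq {set {set 'I_n}}) :
  (forall G, G \in grp -> trivIset G) ->
  psgn R (flatten [seq corder G | G <- grp]) =
  psgn R [seq cover G | G <- grp] *
  \prod_(j < size grp) psgn R (corder (nth set0 grp j)).
Proof.
move=> Ht; rewrite /psgn !inv_countE.
set ls := [seq flatten [seq elems X | X <- corder G] | G <- grp].
set ms := [seq elems (cover G) | G <- grp].
have e1 : flatten [seq elems X | X <- flatten [seq corder G | G <- grp]] = flatten ls.
  by rewrite map_flatten flatten_flatten -!map_comp.
have e2 : flatten [seq elems X | X <- [seq cover G | G <- grp]] = flatten ms.
  by rewrite -map_comp.
have H := invc_flatten (ls := ls) (ms := ms).
rewrite e1 e2.
have hs : sumn [seq invc i | i <- ms] = 0%N.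
  rewrite sumnE big_map big1_seq // => s /andP[_ /mapP[G _ ->]]; exact/invc_sorted/elems_sorted.
have Hc : (invc (flatten ls) = invc (flatten ms) + sumn [seq invc i | i <- ls])%N.
  rewrite -H ?hs ?addn0 ?size_map // => i.
  case: (ltnP i (size grp)) => hi.
    rewrite /ls /ms !(nth_map set0) //; apply: perm_elems_cover; apply: Ht; exact: mem_nth.
  by rewrite !nth_default ?size_map.
rewrite Hc exprD prodrXr; congr (_ * _ ^+ _).
rewrite sumnE big_map /ls big_map (big_nth set0) big_mkord; apply: eq_bigr => j _.
by rewrite inv_countE.
Qed.

End M6.
Import M6.

Module M7.
Unset Implicit Arguments.
Local Open Scope ring_scope.

Lemma tau_congr (R : pzRingType) (M N : Type) (A : nat -> M -> lmodType R)
  (B : nat -> N -> lmodType R) (f : M -> N) (tau : cfamily A B f)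
  (p q : seq nat) (m : M) (k : nat) (g1 g2 : nat -> nat)
  (u : forall j, A (g1 j) m) (w : forall j, A (g2 j) m) :
  p = q -> (forall j, (j < size p)%N -> vcast (fun i => A i m) (nth 0%N p j) (u j)
                                    = vcast (fun i => A i m) (nth 0%N p j) (w j)) ->
  vcast (fun i => B i (f m)) k (tau p m (fun j => vcast (fun i => A i m) (nth 0%N p j) (u j)))
  = vcast (fun i => B i (f m)) k (tau q m (fun j => vcast (fun i => A i m) (nth 0%N q j) (w j))).
Proof.
move=> e H; subst q; congr (vcast (fun i => B i (f m)) k (tau p m _)); apply: functional_extensionality_dep => j.
exact: H.
Qed.


End M7.
Import M7.

Theorem mainTheorem8 (R : realType) (n : nat) (M N P : Type)
  (A : nat -> M -> lmodType R) (B : nat -> N -> lmodType R) (C : nat -> P -> lmodType R)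
  (eta0 : M -> N) (tau0 : N -> P)
  (eta : cfamily A B eta0) (tau : cfamily B C tau0) :
  sym_morphism n eta -> sym_morphism n tau ->
  forall (p : seq nat), valid_index n p ->
  forall (m : M) (x : forall j : 'I_(size p), A (nth 0 p j) m),
    component n (tau0 \o eta0)
      (fun (m' : M) (a : forall I : {set 'I_n}, A #|I| m') =>
         mor_map n tau (eta0 m') (mor_map n eta m' a)) p m x
    = comp_formula n eta tau p m x.
Proof.
Local Open Scope ring_scope.
move=> [mlE _] [mlT _] p Hp m x.
rewrite /component /comp_formula; cbv zeta.
set b := mor_map n eta m (pad n x).
rewrite /mor_map; cbv beta.
rewrite -/(I0 n p) vcast_sum.
rewrite (bigID (fun P0 : {set {set 'I_n}} => good p P0)) /= [Z in _ + Z]big1 ?addr0; last first.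
  move=> Q /andP[pQ /forall_inPn[X XQ hX]].
  have hv := valid_corder pQ (I0_n0 Hp).
  have hj : (index X (corder Q) < size [seq #|Y| | Y : {set 'I_n} <- corder Q])%N.
    by rewrite size_map index_mem mem_corder.
  rewrite (tau_zero mlT hv _ _ (Ordinal hj)) ?vcast0 ?scaler0 ?vcast0 //=.
  rewrite nth_index ?mem_corder // /b (mor_map_pad n p Hp R M N A B eta0 eta mlE m x X).
  by rewrite (negbTE hX) vcast0.
rewrite (reindex_onto (@hmap n) (hmap' p)); last by move=> Q /andP[_ gQ]; exact: hmapK gQ.
apply: eq_big.
  move=> Pi; apply/idP/idP.
    case/andP => /andP[pH gH] /eqP e; rewrite -e. exact (hmap'_part Hp pH gH).
  by move=> pPi; rewrite hmap_part // hmap_good // hmap'K // eqxx.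
move=> Pi /andP[/andP[pH gH] /eqP e].
have pPi : partition Pi (Kset n p) by rewrite -e; exact (hmap'_part Hp pH gH).
have hv0 := valid_corder pH (I0_n0 Hp).
rewrite vcastZ vcastK; last exact: sumn_corder pH.
rewrite (corder_hmap Hp pPi) in hv0 *.
rewrite -/(groups Pi).
set grp := groups Pi.
have Hc : forall G, G \in grp -> G \subset Kset n p.
  by move=> G; rewrite mem_sort mem_enum; apply: Pi_sub.
have -> : (fun j : 'I_(size [seq #|X| | X : {set 'I_n} <- [seq cover G | G <- grp]]) =>
   vcast (fun i => B i (eta0 m)) (nth 0%N [seq #|X| | X : {set 'I_n} <- [seq cover G | G <- grp]] j)
     (b (nth set0 [seq cover G | G <- grp] j)))
  = (fun j => psgn R (corder (nth set0 grp j)) *: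
      vcast (fun i => B i (eta0 m)) (nth 0%N [seq #|X| | X : {set 'I_n} <- [seq cover G | G <- grp]] j)
       (eta [seq #|Y| | Y : {set 'I_n} <- corder (nth set0 grp j)] m
          (fun i => vcast (fun i => A i m) _ (pad n x (nth set0 (corder (nth set0 grp j)) i))))).
  apply: functional_extensionality_dep => j.
  have hj : (j < size grp)%N by have := ltn_ord j; rewrite [X in (_ < X)%N -> _]size_map [X in (_ < X)%N -> _]size_map.
  have Gg := Hc _ (mem_nth set0 hj).
  rewrite [nth set0 _ _](nth_map set0) // /b (mor_map_pad n p Hp R M N A B eta0 eta mlE m x).
  rewrite (GX_cover Hp Gg) eqxx vcastZ vcastK //.
  apply: sumn_corder.
  by have := part_sub_iff Hp (nth set0 grp j) (cover (nth set0 grp j));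
    rewrite (GX_cover Hp Gg) !eqxx Gg andbT.
rewrite (tau_scale mlT hv0) vcastZ scalerA.
congr (_ *: _).
  rewrite psgn_groups; last first.
    by move=> G /Hc sG; apply: trivIsetS sG (Kset_triv n p).
  congr (_ * _)%R.
  rewrite -(big_mkord xpredT (fun j => psgn R (corder (nth set0 grp j)))).
  rewrite -(big_mkord xpredT (fun j => psgn R (corder (nth set0 grp j)))).
  by rewrite !size_map.
apply: (@tau_congr _ _ _ _ _ _ _ _ _ _ _ _ _
  (fun j : nat => eta [seq #|Y| | Y : {set 'I_n} <- corder (nth set0 grp j)] m
          (fun i => vcast (fun i => A i m) _ (pad n x (nth set0 (corder (nth set0 grp j)) i))))
  (fun j : nat => eta [seq #|X| | X : {set 'I_n} <- nth [::] [seq corder G | G <- grp] j] m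
          (fun i => vcast (fun i => A i m) _
             (pad n x (nth set0 (nth [::] [seq corder G | G <- grp] j) i))))).
  by rewrite -map_comp.
move=> j; rewrite !size_map => hj /=.
by rewrite [nth [::] _ _](nth_map set0).
Qed.
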